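(* If $\mathcal C\subseteq 2^{[n]}$ is inductively pierced, then $\mathcal C$ is degree two, i.e. every element of $\mathrm{CF}(J_\mathcal C)$ has degree two.
   Context: A code is a set $\mathcal C\subseteq 2^{[n]}$, $[n]=\{1,\dots,n\}$, elements of $[n]$ being neurons. Standing conventions: $\emptyset\in\mathcal C$; every neuron lies in some codeword; no two distinct neurons lie in exactly the same codewords. For $i\in[n]$, $\mathcal C\setminus i$ is obtained by removing $i$ from every codeword. For $\sigma\subseteq\tau$, $[\sigma,\tau]=\{\gamma:\sigma\subseteq\gamma\subseteq\tau\}$, of rank $|\tau\setminus\sigma|$. A neuron $i$ is a $k$-piercing of $\mathcal C$ if there are $\sigma\subseteq\tau\subseteq[n]\setminus\{i\}$ with $[\sigma,\tau]$ of rank $k$, $[\sigma,\tau]\subseteq\mathcal C\setminus i$, and $\mathcal C=(\mathcal C\setminus i)\cup[\sigma\cup\{i\},\tau\cup\{i\}]$. A code is $k$-inductively pierced if $\mathcal C=\{\emptyset\}$, or some neuron $i$ is a $k'$-piercing for some $k'\le k$ and $\mathcal C\setminus i$ is $k$-inductively pierced; inductively pierced means $k$-inductively pierced for some $k$. A pseudo-monomial in $\mathbb F_2[x_1,\dots,x_n]$ is $\prod_{i\in\sigma}x_i\prod_{j\in\tau}(1-x_j)$ with $\sigma\cap\tau=\emptyset$, ordered by divisibility. $J_\mathcal C=\langle\rho_\sigma:\sigma\notin\mathcal C\rangle$ with $\rho_\sigma=\prod_{i\in\sigma}x_i\prod_{j\notin\sigma}(1-x_j)$, and $\mathrm{CF}(J_\mathcal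 C)$ is the set of minimal pseudo-monomials in $J_\mathcal C$. *)

(* Defs.v *)
From mathcomp Require Import all_boot all_algebra.
From mathcomp Require Import mpoly.
Set Implicit Arguments. Unset Strict Implicit. Unset Printing Implicit Defensive.
Import GRing.Theory.
Local Open Scope ring_scope.

(* Neurons are the elements of 'I_n (i.e. [n] = {1..n} shifted to {0..n-1}).
   A code is a set of codewords, each codeword a subset of 'I_n. *)
Definition code (n : nat) := {set {set 'I_n}}.

Definition code_conventions (n : nat) (C : code n) : Prop :=
  [/\ set0 \in C,
      (forall i : 'I_n, exists2 c, c \in C & i \in c) &
      (forall i j : 'I_n, (forall c, c \in C -> (i \in c) = (j \in c)) -> i = j)].

(* C \ i : remove neuron i from every codeword (ambient neuron set kept). *)
Definition code_remove (n : nat) (i : 'I_n) (C : code n) : code n :=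
  [set c :\ i | c in C].

Definition interval (n : nat) (s t : {set 'I_n}) : {set {set 'I_n}} :=
  [set g : {set 'I_n} | (s \subset g) && (g \subset t)].

Definition is_piercing (n : nat) (k : nat) (i : 'I_n) (C : code n) : Prop :=
  exists s t : {set 'I_n},
    [/\ s \subset t, i \notin t, #|t :\: s| = k,
        interval s t \subset code_remove i C &
        C = code_remove i C :|: [set g :|: [set i] | g in interval s t]].

Inductive k_ind_pierced (n : nat) (k : nat) : code n -> Prop :=
  | kip_base : k_ind_pierced k [set set0]
  | kip_step (C : code n) (i : 'I_n) (k' : nat) :
      (k' <= k)%N -> is_piercing k' i C -> k_ind_pierced k (code_remove i C) ->
      k_ind_pierced k C.

Definition ind_pierced (n : nat) (C : code n) : Prop :=
  exists k, k_ind_pierced k C.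

Notation F2poly n := {mpoly 'F_2[n]}.

Definition pmono (n : nat) (s t : {set 'I_n}) : F2poly n :=
  (\prod_(i in s) 'X_i) * \prod_(j in t) (1 - 'X_j).

Definition is_pseudo_monomial (n : nat) (f : F2poly n) : Prop :=
  exists s t : {set 'I_n}, [disjoint s & t] /\ f = pmono s t.

Definition rho (n : nat) (s : {set 'I_n}) : F2poly n := pmono s (~: s).

Definition in_neural_ideal (n : nat) (C : code n) (f : F2poly n) : Prop :=
  exists g : {set 'I_n} -> F2poly n,
    f = \sum_(s : {set 'I_n} | s \notin C) g s * rho s.

Definition mdivides (n : nat) (g f : F2poly n) : Prop :=
  exists h : F2poly n, f = h * g.

Definition in_canonical_form (n : nat) (C : code n) (f : F2poly n) : Prop :=
  [/\ is_pseudo_monomial f, in_neural_ideal C f &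
      forall g, is_pseudo_monomial g -> in_neural_ideal C g ->
        mdivides g f -> g = f].

(* total degree: msize p = 1 + total degree (0 for p = 0) *)
Definition mpoly_degree (n : nat) (f : F2poly n) : nat := (msize f).-1.

Definition degree_two (n : nat) (C : code n) : Prop :=
  forall f, in_canonical_form C f -> mpoly_degree f = 2%N.

(* Main.v *)
Require Import Defs.
From mathcomp Require Import all_boot all_algebra.
From mathcomp Require Import mpoly.
Set Implicit Arguments. Unset Strict Implicit. Unset Printing Implicit Defensive.
Import GRing.Theory.
Local Open Scope ring_scope.

Lemma disjP (n : nat) (A B : {set 'I_n}) :
  reflect (forall x, x \in A -> x \notin B) [disjoint A & B].
Proof.
rewrite disjoints_subset; apply: (iffP subsetP) => h x xA.
  by rewrite -in_setC h.
by rewrite in_setC h.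
Qed.

Definition sat (n : nat) (c a b : {set 'I_n}) : bool :=
  (a \subset c) && (b \subset ~: c).

Lemma satP (n : nat) (c a b : {set 'I_n}) :
  reflect ((forall x : 'I_n, x \in a -> x \in c) /\ (forall x : 'I_n, x \in b -> x \notin c))
          (sat c a b).
Proof.
apply: (iffP andP) => [[/subsetP h1 /subsetP h2]|[h1 h2]]; split.
- exact: h1.
- by move=> x xb; rewrite -in_setC h2.
- exact/subsetP.
- by apply/subsetP => x xb; rewrite in_setC h2.
Qed.

Definition vc (n : nat) (c : {set 'I_n}) : 'I_n -> 'F_2 :=
  fun i => ((i \in c) : nat)%:R.

Lemma eval_pmono (n : nat) (v : 'I_n -> 'F_2) (s t : {set 'I_n}) :
  (pmono s t).@[v] = \prod_(i in s) v i * \prod_(j in t) (1 - v j).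
Proof.
rewrite /pmono mevalM !rmorph_prod /=; congr (_ * _).
  by apply: eq_bigr => i _; rewrite mevalXU.
by apply: eq_bigr => i _; rewrite mevalB meval1 mevalXU.
Qed.

Lemma eval_pmono_vc (n : nat) (c s t : {set 'I_n}) :
  ((pmono s t).@[vc c] != 0) = sat c s t.
Proof.
rewrite eval_pmono mulf_eq0 negb_or.
apply/idP/idP.
- case/andP => /prodf_neq0 h1 /prodf_neq0 h2; apply/satP; split.
    by move=> x xs; have := h1 x xs; rewrite /vc; case: (x \in c); rewrite ?eqxx.
  move=> x xt; have := h2 x xt; rewrite /vc; case: (x \in c) => //=.
- case/satP => h1 h2; apply/andP; split; apply/prodf_neq0.
    by move=> x xs; rewrite /vc h1 // oner_neq0.
  by move=> x xt; rewrite /vc (negbTE (h2 x xt)) subr0 oner_neq0.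
Qed.

Definition forbidden (n : nat) (C : code n) (a b : {set 'I_n}) : Prop :=
  forall c, c \in C -> ~~ sat c a b.

Lemma ideal_forbidden (n : nat) (C : code n) (s t : {set 'I_n}) :
  in_neural_ideal C (pmono s t) -> forbidden C s t.
Proof.
move=> [g Hg] c cC; rewrite -eval_pmono_vc Hg negbK rmorph_sum /=.
apply/eqP; apply: big1 => x xC; rewrite mevalM.
have : ~~ ((rho x).@[vc c] != 0).
  rewrite /rho eval_pmono_vc; apply/negP => /satP [h1 h2].
  suff Exc : x = c by rewrite Exc cC in xC.
  apply/setP => y; apply/idP/idP; first exact: h1.
  by move=> yc; apply: contraTT yc => yx; apply: h2; rewrite in_setC.
rewrite negbK => /eqP ->.
by rewrite mulr0.
Qed.

Lemma ideal_add (n : nat) (C : code n) (f1 f2 : F2poly n) :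
  in_neural_ideal C f1 -> in_neural_ideal C f2 -> in_neural_ideal C (f1 + f2).
Proof.
move=> [g1 ->] [g2 ->]; exists (fun x => g1 x + g2 x).
by rewrite -big_split /=; apply: eq_bigr => x _; rewrite mulrDl.
Qed.

Lemma ideal_rho (n : nat) (C : code n) (s : {set 'I_n}) :
  s \notin C -> in_neural_ideal C (rho s).
Proof.
move=> sC; exists (fun x => if x == s then 1 else 0).
rewrite (bigD1 s) //= eqxx mul1r big1 ?addr0 // => x /andP [_ /negbTE ->].
by rewrite mul0r.
Qed.

Lemma pmono_addX (n : nat) (s t : {set 'I_n}) (k : 'I_n) :
  k \notin s -> pmono (k |: s) t = 'X_k * pmono s t.
Proof. by move=> ks; rewrite /pmono big_setU1 //= mulrA. Qed.

Lemma pmono_add1X (n : nat) (s t : {set 'I_n}) (k : 'I_n) :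
  k \notin t -> pmono s (k |: t) = (1 - 'X_k) * pmono s t.
Proof.
by move=> kt; rewrite /pmono big_setU1 //= mulrCA.
Qed.

Lemma forbidden_ideal (n : nat) (C : code n) (s t : {set 'I_n}) :
  [disjoint s & t] -> forbidden C s t -> in_neural_ideal C (pmono s t).
Proof.
move Em : #|~: (s :|: t)| => m.
elim: m s t Em => [|m IH] s t Em dst fst.
  have Et : t = ~: s.
    move/eqP: Em; rewrite cards_eq0 => /eqP Hu.
    have Hst : forall x, x \in s :|: t.
      move=> x; apply: contraT => hx.
      by move: (in_setC x (s :|: t)); rewrite Hu inE hx.
    apply/setP => x; rewrite in_setC; apply/idP/idP.
      by move=> xt; apply: contraTN xt => xs; move/disjP: dst => /(_ x xs).
    by move=> xs; have := Hst x; rewrite in_setU (negbTE xs).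
  rewrite Et; apply: ideal_rho; apply/negP => sC.
  have := fst s sC; apply/negP/negPn/satP; split=> // x xt.
  by apply: contraTN xt => xs; move/disjP: dst => /(_ x xs).
have : (0 < #|~: (s :|: t)|)%N by rewrite Em.
case/card_gt0P => k; rewrite in_setC in_setU negb_or => /andP [ks kt].
have -> : pmono s t = pmono (k |: s) t + pmono s (k |: t).
  by rewrite pmono_addX // pmono_add1X // -mulrDl addrCA subrr addr0 mul1r.
have Hc : forall A, k \in ~: A -> #|~: (k |: A)| = #|~: A|.-1.
  move=> A kA.
  have E : ~: (k |: A) = ~: A :\ k by apply/setP => x; rewrite !inE negb_or andbC.
  by rewrite E (cardsD1 k (~: A)) kA.
apply: ideal_add; apply: IH.
- rewrite -setUA Hc; first by rewrite Em.
  by rewrite in_setC in_setU negb_or ks kt.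
- apply/disjP => x; rewrite in_setU1 => /orP [/eqP -> //| xs].
  by move/disjP: dst => /(_ x xs).
- move=> c cC; apply: contra (fst c cC); case/satP => h1 h2; apply/satP; split=> //.
  by move=> x xs; apply: h1; rewrite in_setU1 xs orbT.
- rewrite setUCA Hc; first by rewrite Em.
  by rewrite in_setC in_setU negb_or ks kt.
- apply/disjP => x xs; rewrite in_setU1 negb_or; apply/andP; split.
    by apply: contraNneq ks => <-.
  by move/disjP: dst => /(_ x xs).
- move=> c cC; apply: contra (fst c cC); case/satP => h1 h2; apply/satP; split=> //.
  by move=> x xt; apply: h2; rewrite in_setU1 xt orbT.
Qed.
Lemma msize_Xi (n : nat) (i : 'I_n) : msize ('X_i : F2poly n) = 2%N.
Proof. by rewrite msizeX mdeg1. Qed.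

Lemma msize_1Xi (n : nat) (i : 'I_n) : msize (1 - 'X_i : F2poly n) = 2%N.
Proof.
apply/anti_leq/andP; split.
  apply: (leq_trans (msizeD_le _ _)).
  by rewrite msizeN msize_Xi msize1.
have : U_(i)%MM \in msupp (1 - 'X_i : F2poly n).
  rewrite mcoeff_msupp mcoeffB mcoeff1 mcoeffXU eqxx.
  have -> : (U_(i) == 0)%MM = false.
    apply/negbTE; apply/eqP => h; have := mdeg1 i; rewrite h mdeg0 //.
  by rewrite sub0r oppr_eq0 oner_neq0.
by move/msize_mdeg_lt; rewrite mdeg1.
Qed.

Lemma msize_prod2 (n : nat) (I : Type) (r : seq I) (F : I -> F2poly n) :
  (forall x, msize (F x) = 2%N) -> msize (\prod_(x <- r) F x) = (size r).+1.
Proof.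
move=> HF; elim: r => [|x r IH]; first by rewrite big_nil msize1.
rewrite big_cons msizeM ?HF ?IH //.
  by rewrite -msize_poly_eq0 HF.
by rewrite -msize_poly_eq0 IH.
Qed.

Lemma msize_pmono (n : nat) (s t : {set 'I_n}) :
  msize (pmono s t) = (#|s| + #|t|).+1.
Proof.
rewrite /pmono -!big_enum /= msizeM.
- rewrite !msize_prod2 ?cardE ?addSn ?addnS //; [move=> x; exact: msize_1Xi| move=> x; exact: msize_Xi].
- by rewrite -msize_poly_eq0 msize_prod2 //; move=> x; exact: msize_Xi.
- by rewrite -msize_poly_eq0 msize_prod2 //; move=> x; exact: msize_1Xi.
Qed.

Lemma pmono_div (n : nat) (s t s' t' : {set 'I_n}) :
  s' \subset s -> t' \subset t -> mdivides (pmono s' t') (pmono s t).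
Proof.
move=> ss tt; exists (pmono (s :\: s') (t :\: t')).
rewrite /pmono (big_setID s') (big_setID t' (A := t)) /=.
rewrite (setIidPr ss) (setIidPr tt).
by rewrite mulrACA; exact: mulrC.
Qed.

Lemma pmono_inj (n : nat) (s t s' t' : {set 'I_n}) :
  [disjoint s & t] -> s' \subset s -> t' \subset t ->
  pmono s' t' = pmono s t -> s' = s /\ t' = t.
Proof.
move=> dst /subsetP ss /subsetP tt E.
set c := s' :|: (t :\: t').
have : sat c s' t'.
  apply/satP; split=> x; rewrite !inE.
    by move=> ->.
  move=> xt'; rewrite negb_or negb_and xt' /= andbT.
  have xt := tt x xt'.
  by apply/negP => xs'; move/disjP: dst => /(_ x (ss x xs')); rewrite xt.
rewrite -eval_pmono_vc E eval_pmono_vc => /satP [h1 h2]; split.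
  apply/setP => x; apply/idP/idP; first exact: ss.
  move=> xs; have := h1 x xs; rewrite !inE => /orP [//|/andP [_ xt]].
  by move/disjP: dst => /(_ x xs); rewrite xt.
apply/setP => x; apply/idP/idP; first exact: tt.
move=> xt; have := h2 x xt; rewrite !inE negb_or xt andbT negbK => /andP [_ //].
Qed.

Definition minimal (n : nat) (C : code n) (a b : {set 'I_n}) : Prop :=
  forbidden C a b /\
  forall a' b' : {set 'I_n}, a' \subset a -> b' \subset b -> forbidden C a' b' -> a' = a /\ b' = b.

Lemma core (n k : nat) (C : code n) : k_ind_pierced k C ->
  forall a b : {set 'I_n}, [disjoint a & b] -> minimal C a b ->
  (#|a| + #|b| = 2)%N \/ (#|a| = 1%N /\ b = set0).
Proof.
elim=> {C} [|C i k' _ Hp _ IH] a b dab [fab mab].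
  have : a != set0.
    apply: contraNneq (fab set0 (set11 _)) => ->; apply/satP; split=> //.
    by move=> x _; rewrite inE.
  case/set0Pn => x xa.
  have [<- <-] : [set x] = a /\ set0 = b.
    apply: mab; rewrite ?sub1set ?sub0set //.
    move=> c; rewrite inE => /eqP ->; apply/negP => /satP [h _].
    by have := h x (set11 x); rewrite inE.
  by right; rewrite cards1.
case: Hp => s [t [st it _ intC EqC]].
set C' := code_remove i C in IH intC EqC.
have memC' : forall c, c \in C' -> i \notin c.
  by move=> c /imsetP [c0 _ ->]; rewrite in_setD1 eqxx.
have remC : forall c, c \in C -> c :\ i \in C' by move=> c cC; apply: imset_f.
have C'C : forall c, c \in C' -> c \in C by move=> c cC; rewrite EqC in_setU cC.
have F1 : forall c, c \in C -> i \in c ->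
    exists2 g : {set 'I_n}, (s \subset g) && (g \subset t) & c = g :|: [set i].
  move=> c; rewrite {1}EqC in_setU => /orP [/memC' /negbTE -> //|].
  by case/imsetP => g; rewrite inE => hg ->; exists g.
have F2 : forall g : {set 'I_n}, (s \subset g) && (g \subset t) -> g :|: [set i] \in C.
  by move=> g hg; rewrite EqC in_setU; apply/orP; right; apply: imset_f; rewrite inE.
have key : forall c a b : {set 'I_n}, i \notin a -> i \notin b -> sat (c :\ i) a b = sat c a b.
  move=> c a0 b0 ia ib; apply/satP/satP => [[h1 h2]|[h1 h2]]; split.
  - by move=> x xa; have := h1 x xa; rewrite in_setD1 => /andP [].
  - move=> x xb; have := h2 x xb; rewrite in_setD1 negb_and negbK => /orP [/eqP ex|//].
    by rewrite -ex xb in ib.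
  - move=> x xa; rewrite in_setD1 h1 // andbT; apply: contraNneq ia => <- //.
  - by move=> x xb; rewrite in_setD1 negb_and h2 // orbT.
have [ia|nia] := boolP (i \in a).
  have nib : i \notin b by move/disjP: dab => /(_ i ia).
  have [/existsP [k0 /and3P [k0a k0i k0t]]|nk] :=
      boolP [exists k0, [&& k0 \in a, k0 != i & k0 \notin t]].
    have [<- <-] : [set i; k0] = a /\ set0 = b.
      apply: mab; rewrite ?sub0set //.
        by apply/subsetP => x; rewrite !inE => /orP [/eqP ->|/eqP ->].
      move=> c cC; apply/negP => /satP [h1 _].
      have [g /andP [_ gt] Ec] := F1 c cC (h1 i (set21 _ _)).
      have := h1 k0 (set22 _ _); rewrite Ec in_setU in_set1 (negbTE k0i) orbF.
      by move=> k0g; move/subsetP: gt => /(_ k0 k0g); rewrite (negbTE k0t).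
    by left; rewrite cards2 cards0 eq_sym k0i.
  have [/existsP [j /andP [jb js]]|nj] := boolP [exists j, (j \in b) && (j \in s)].
    have [<- <-] : [set i] = a /\ [set j] = b.
      apply: mab; rewrite ?sub1set //.
      move=> c cC; apply/negP => /satP [h1 h2].
      have [g /andP [sg _] Ec] := F1 c cC (h1 i (set11 _)).
      have := h2 j (set11 _); rewrite Ec in_setU.
      by move/subsetP: sg => /(_ j js) ->.
    by left; rewrite !cards1.
  exfalso.
  set g := a :\ i :|: s.
  have hg : (s \subset g) && (g \subset t).
    rewrite subsetUr /=; apply/subsetP => x; rewrite !inE => /orP [/andP [xi xa]|xs].
      apply: contraR nk => xt; apply/existsP; exists x; rewrite xa xi //.
    by move/subsetP: st; apply.
  have := fab _ (F2 g hg); apply/negP/negPn/satP; split.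
    move=> x xa; rewrite !inE; case: (x =P i) => [->|xi] /=; first by rewrite orbT.
    by rewrite xa.
  move=> x xb; rewrite !inE; apply/negP => /orP [/orP [/andP [_ xa]|xs]|/eqP xi].
  - by move/disjP: dab => /(_ x xa); rewrite xb.
  - by move: nj; apply/negP/negPn/existsP; exists x; rewrite xb xs.
  - by rewrite -xi xb in nib.
have [ib|nib] := boolP (i \in b).
  exfalso.
  have [_ Eb] : a = a /\ b :\ i = b.
    apply: mab; rewrite ?subxx ?subD1set //.
    move=> c cC; apply/negP => /satP [h1 h2].
    have [ic|nic] := boolP (i \in c).
      have [g /andP [sg gt] Ec] := F1 c cC ic.
      have gC : g \in C by apply: C'C; move/subsetP: intC; apply; rewrite inE sg gt.
      have ig : i \notin g by apply: contraNN it; move/subsetP: gt; apply.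
      have := fab g gC; apply/negP/negPn/satP; split.
        move=> x xa; have := h1 x xa; rewrite Ec in_setU in_set1.
        by case/orP => // /eqP ex; rewrite -ex xa in nia.
      move=> x xb; apply/negP => xg.
      have xi : x != i by apply: contraNneq ig => <-.
      by have := h2 x; rewrite in_setD1 xi xb Ec in_setU xg => /(_ isT).
    have := fab c cC; apply/negP/negPn/satP; split=> // x xb.
    case: (x =P i) => [->//|/eqP xi]; apply: h2; rewrite in_setD1 xi xb.
    by [].
  by move: ib; rewrite -Eb in_setD1 eqxx.
apply: (IH a b dab); split.
  move=> c /imsetP [c0 c0C ->]; rewrite key //; exact: fab.
move=> a' b' sa sb f'; apply: mab => //.
move=> c cC; rewrite -key; first exact: f' (remC c cC).
  by apply: contraNN nia; move/subsetP: sa; apply.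
by apply: contraNN nib; move/subsetP: sb; apply.
Qed.

Theorem proposition1p4 (n : nat) (C : code n) :
  code_conventions C -> ind_pierced C -> degree_two C.
Proof.
case=> H0 Hneur _ [k Hk] f [[s [t [dst ->]]] Hid Hmin].
have fst := ideal_forbidden Hid.
have Hm : minimal C s t.
  split=> // a' b' sa sb fab.
  apply: (pmono_inj dst sa sb); apply: Hmin.
  - exists a', b'; split=> //.
    apply/disjP => x xa; move/disjP: dst => /(_ x).
    move/subsetP: sa => /(_ x xa) xs /(_ xs); apply: contraNN.
    by move/subsetP: sb; apply.
  - apply: forbidden_ideal => //.
    apply/disjP => x xa; move/disjP: dst => /(_ x).
    move/subsetP: sa => /(_ x xa) xs /(_ xs); apply: contraNN.
    by move/subsetP: sb; apply.
  - exact: pmono_div.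
have [H2|[/eqP /cards1P [x Es] Et]] := core Hk dst Hm.
  by rewrite /mpoly_degree msize_pmono H2.
exfalso; have [c cC xc] := Hneur x.
rewrite Es Et in fst.
have := fst c cC; apply/negP/negPn/satP; split.
  by move=> y /set1P ->.
by move=> y; rewrite in_set0.
Qed.
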